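(* Let $G_1,\ldots,G_l$ be directed acyclic graphs with pairwise disjoint node sets, $n_i=|V(G_i)|$, $n=\sum_in_i$, where the nodes of each $G_i$ are indexed $1,\ldots,n_i$ according to a topological ordering (so every edge $(a,b)$ of $G_i$ satisfies $a>b$). Let $S$ be a sequence of length $n$ in which each $G_i$ occurs exactly $n_i$ times and no two consecutive entries are equal; identify the $j$th occurrence of $G_i$ in $S$ with the node of $G_i$ of index $j$, and let $T(w)=k$ if the node $w$ is identified with position $k$ of $S$. Let $G$ be the graph with node set $\bigcup_iV(G_i)$ and edge set $\bigcup_iE(G_i)$ together with, for each $k=1,\ldots,n-1$, an edge from the node identified with position $k$ to the node identified with position $k+1$. Let $v$ be the node with $T(v)=1$ and $V_C=\{v\}$. Then the LTI network on $G$ with control node set $V_C$ is strongly structurally controllable.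
   Context: Graphs are directed. A directed acyclic graph has no directed cycles. $\mathcal{Q}(G)=\{A\in\mathbb{R}^{n\times n}:\text{for } i\neq j,\ A_{ij}\neq0\iff(j,i)\in E(G)\}$; for control nodes $V_C=\{j_1,\ldots,j_k\}$ (nodes labeled $1,\ldots,n$), $B=[e_{j_1},\ldots,e_{j_k}]$; the LTI network $\dot x=Ax+Bu$ on $G$ with control nodes $V_C$ is strongly structurally controllable if $(A,B)$ is controllable for every $A\in\mathcal{Q}(G)$. *)

(* Defs.v *)
From HB Require Import structures.
From mathcomp Require Import all_boot all_order all_algebra.
From mathcomp Require Import reals.
Set Implicit Arguments. Unset Strict Implicit. Unset Printing Implicit Defensive.
Import Order.TTheory GRing.Theory Num.Theory.
Local Open Scope ring_scope.

Definition ctrb_mx (R : comRingType) (n m : nat) (A : 'M[R]_n) (B : 'M[R]_(n, m)) :=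
  \mxrow_(k < n) (A ^+ k *m B).

Definition controllable (R : fieldType) (n m : nat) (A : 'M[R]_n) (B : 'M[R]_(n, m)) :=
  \rank (ctrb_mx A B) = n.

(* Q(G) for a graph with edge relation e on a finite node type, the nodes
   being labelled 0..n-1 by the bijection lab:  for distinct nodes w, w',
   A_(lab w', lab w) <> 0  iff  (w, w') is an edge (from w to w'). *)
Definition in_Q (R : ringType) (V : finType) (n : nat) (lab : V -> 'I_n)
  (e : rel V) (A : 'M[R]_n) :=
  forall w w' : V, w != w' -> (A (lab w') (lab w) != 0) = e w w'.

Definition ctrl_B (R : ringType) (V : finType) (n : nat) (lab : V -> 'I_n) (v : V)
  : 'M[R]_(n, 1) := delta_mx (lab v) 0.

(* Position (0-based) of the j-th (0-based) occurrence of i in S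
   (= size S if there is none). *)
Definition occ_pos (T : eqType) (S : seq T) (i : T) (j : nat) : nat :=
  find (fun k => (nth i S k == i) && (count_mem i (take k S) == j))
       (iota 0 (size S)).

(* Nodes of the disjoint union of G_1..G_l: node j (0-based) of G_i. *)
Definition node (l : nat) (ns : 'I_l -> nat) : finType := {i : 'I_l & 'I_(ns i)}.

Definition Tpos (l : nat) (ns : 'I_l -> nat) (S : seq 'I_l) (w : node ns) : nat :=
  occ_pos S (tag w) (val (tagged w)).

Definition G_edge (l : nat) (ns : 'I_l -> nat) (E : 'I_l -> rel nat) (S : seq 'I_l)
  (w w' : node ns) : bool :=
  ((tag w == tag w') && E (tag w) (val (tagged w)) (val (tagged w')))
  || ((Tpos S w).+1 == Tpos S w').

(* Main.v *)
Require Import Defs.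
From HB Require Import structures.
From mathcomp Require Import all_boot all_order all_algebra.
From mathcomp Require Import reals.
Import Order.TTheory GRing.Theory Num.Theory.
Local Open Scope ring_scope.

Lemma hess_ctrb (R : fieldType) (n : nat) (A : 'M[R]_n) (s : 'I_n -> 'I_n)
  (sinj : injective s) (c : 'I_n)
  (h1 : forall m k : 'I_n, (m.+1 < k)%N -> A (s k) (s m) = 0)
  (h2 : forall m k : 'I_n, (k == m.+1 :> nat) -> A (s k) (s m) != 0)
  (hc : forall k : 'I_n, (s k == c) = (k == 0 :> nat)) :
  controllable A (delta_mx c 0 : 'M[R]_(n, 1)).
Proof.
set B := delta_mx c 0 : 'M[R]_(n, 1).
have key : forall k : nat,
  (forall k' : 'I_n, (k < k')%N -> (A ^+ k *m B) (s k') 0 = 0) /\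
  (forall k' : 'I_n, (k == k' :> nat) -> (A ^+ k *m B) (s k') 0 != 0).
  elim=> [|k [IH1 IH2]].
    rewrite expr0 mul1mx; split=> k' hk'; rewrite /B mxE hc eqxx andbT.
      by rewrite eqn0Ngt hk'.
    by rewrite -(eqP hk') eqxx oner_neq0.
  have E k' : (A ^+ k.+1 *m B) (s k') 0 =
     \sum_(m < n) A (s k') (s m) * (A ^+ k *m B) (s m) 0.
    rewrite exprS -mulmxE -mulmxA mxE.
    by rewrite (reindex_inj sinj).
  split=> k' hk'; rewrite E.
    apply: big1 => m _.
    case: (ltnP k m) => hm; first by rewrite IH1 // mulr0.
    by rewrite h1 ?mul0r //; apply: leq_ltn_trans hk'; rewrite ltnS.
  have kn : (k < n)%N by rewrite (eqP hk') ltnW.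
  rewrite (bigD1 (Ordinal kn)) //= big1 ?addr0.
    by apply: mulf_neq0; [apply: h2; rewrite eq_sym | apply: IH2].
  move=> m hm; case: (ltngtP k m) => hkm.
  - by rewrite IH1 // mulr0.
  - by rewrite h1 ?mul0r // -(eqP hk') ltnS.
  - by case/eqP: hm; apply: val_inj.
pose X k := A ^+ k *m B.
pose Y := \mxcol_(k < n) (delta_mx 0 k : 'M[R]_(1, n)).
pose P := \matrix_(a < n, b < n) ((s a == b)%:R : R).
have HY : ctrb_mx A B *m Y = \matrix_(i, j) X j i 0.
  apply/matrixP => i j; rewrite /ctrb_mx mul_mxrow_mxcol summxE (bigD1 j) //=.
  rewrite big1 ?addr0.
    by rewrite !mxE big_ord1 !mxE eqxx andbT mulr1.
  by move=> k hk; rewrite eq_sym in hk; rewrite !mxE big_ord1 !mxE (negbTE hk) andbF mulr0.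
have HM : P *m (ctrb_mx A B *m Y) = \matrix_(a, b) X b (s a) 0.
  rewrite HY; apply/matrixP=> a b; rewrite !mxE.
  rewrite (bigD1 (s a)) //= big1 ?addr0.
    by rewrite !mxE eqxx mul1r.
  by move=> j hj; rewrite eq_sym in hj; rewrite !mxE (negbTE hj) mul0r.
have Hu : (\matrix_(a, b) X b (s a) 0) \in unitmx.
  rewrite unitmxE unitfE -det_tr det_trig.
    apply/prodf_neq0 => i _; rewrite !mxE; case: (key i) => _ H; have := H i (eqxx _); rewrite mxE; exact.
  apply/is_trig_mxP => i j hij; rewrite !mxE.
  by case: (key i) => H _; have := H j hij; rewrite mxE.
apply/eqP; rewrite eqn_leq rank_leq_row /=.
rewrite -{1}(mxrank_unit Hu) -HM.
apply: leq_trans (mxrankM_maxr _ _) _.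
exact: mxrankM_maxl.
Qed.

Lemma find_iota_eq (p : pred nat) n k : (k < n)%N -> p k ->
  (forall k', (k' < k)%N -> ~~ p k') -> find p (iota 0 n) = k.
Proof.
move=> kn pk hb; case: (ltngtP (find p (iota 0 n)) k) => h //.
  have hh : has p (iota 0 n) by apply/hasP; exists k; rewrite ?mem_iota.
  have := nth_find 0 hh; rewrite nth_iota ?add0n; last exact: ltn_trans h kn.
  by rewrite (negbTE (hb _ h)).
by have := before_find 0 h; rewrite nth_iota // pk.
Qed.

Lemma count_take_le (T : eqType) (s : seq T) x a b : (a <= b)%N ->
  (count_mem x (take a s) <= count_mem x (take b s))%N.
Proof. by move=> ab; rewrite -(subnKC ab) takeD count_cat leq_addr. Qed.

Lemma count_take_lt (T : eqType) (x0 : T) (s : seq T) a b : (a < b)%N ->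
  (a < size s)%N ->
  (count_mem (nth x0 s a) (take a s) < count_mem (nth x0 s a) (take b s))%N.
Proof.
move=> ab as_; apply: leq_trans _ (@count_take_le _ s _ _ _ ab).
by rewrite (take_nth x0 as_) -cats1 count_cat /= eqxx addn0 addn1.
Qed.

Lemma occ_posP (T : eqType) (s : seq T) i j : (occ_pos s i j < size s)%N ->
  nth i s (occ_pos s i j) = i /\ count_mem i (take (occ_pos s i j) s) = j.
Proof.
rewrite /occ_pos => h.
have hh : has (fun k => (nth i s k == i) && (count_mem i (take k s) == j))
   (iota 0 (size s)) by rewrite has_find size_iota.
have := nth_find 0 hh; rewrite nth_iota ?add0n; last by [].
by case/andP => /eqP -> /eqP ->.
Qed.

Arguments count_take_lt {T}.
Arguments count_take_le {T}.
Arguments occ_posP {T}.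

Theorem proposition4 (R : realType) (l : nat) (ns : 'I_l -> nat)
  (E : 'I_l -> rel nat)
  (* each G_i has nodes 0..ns i - 1 in topological order: every edge (a,b) has b < a *)
  (hE : forall (i : 'I_l) (a b : nat), E i a b -> ((a < ns i) && (b < a))%N)
  (n : nat) (hn : n = (\sum_(i < l) ns i)%N)
  (S : seq 'I_l) (hS : size S = n)
  (hcount : forall i : 'I_l, count_mem i S = ns i)
  (hnoadj : forall (x0 : 'I_l) (k : nat), (k.+1 < size S)%N -> nth x0 S k != nth x0 S k.+1)
  (v : node ns) (hv : Tpos S v = 0%N)
  (lab : node ns -> 'I_n) (hlab : bijective lab) :
  forall A : 'M[R]_n, in_Q lab (G_edge E S) A -> controllable A (ctrl_B R lab v).
Proof.
move=> A hA.
set x0 := tag v.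
have hk : forall k : 'I_n, (k < size S)%N by move=> k; rewrite hS.
have hlt : forall k : 'I_n,
    (count_mem (nth x0 S k) (take k S) < ns (nth x0 S k))%N.
  by move=> k; rewrite -hcount; have := count_take_lt x0 S _ _ (hk k) (hk k); rewrite take_size.
pose nd (k : 'I_n) : node ns := Tagged (fun i => 'I_(ns i)) (Ordinal (hlt k)).
have Tnd : forall k : 'I_n, Tpos S (nd k) = k.
  move=> k; rewrite /Tpos /occ_pos /=; apply: find_iota_eq.
  - exact: hk.
  - by rewrite (set_nth_default x0 _ (hk k)) !eqxx.
  move=> k' hk'; apply/negP => /andP [/eqP e /eqP c].
  have k's : (k' < size S)%N by apply: ltn_trans hk' (hk k).
  rewrite (set_nth_default x0 _ k's) in e.
  by have := count_take_lt x0 S _ _ hk' k's; rewrite e c ltnn.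
have Tinj : forall w w' : node ns, Tpos S w = Tpos S w' -> (Tpos S w < size S)%N -> w = w'.
  move=> w w'; rewrite /Tpos => e h; have h' := h; rewrite e in h'.
  have [e1 e2] := occ_posP _ _ _ h; have [e1' e2'] := occ_posP _ _ _ h'.
  move: e1 e2 e1' e2' h h'; rewrite -e.
  move: (occ_pos S (tag w) (val (tagged w))) => k e1 e2 e1' e2' h _.
  have et : tag w = tag w'.
    by rewrite -[LHS]e1 -[RHS]e1'; apply: set_nth_default; exact: h.
  have ev : val (tagged w) = val (tagged w').
    by rewrite -[LHS]e2 -[RHS]e2' et.
  clear -et ev; case: w et ev => i x; case: w' => i' x' /= et.
  by subst i' => ev; congr existT; apply: val_inj.
have n0 : (0 < n)%N by case: (lab v) => m /= hm; apply: leq_ltn_trans hm.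
pose z : 'I_n := Ordinal n0.
have vz : v = nd z.
  by apply: Tinj; rewrite ?Tnd ?hv ?hS.
have ndinj : injective nd.
  by move=> a b /(congr1 (Tpos S)); rewrite !Tnd => /val_inj.
have neq : forall a b : 'I_n, a != b -> nd a != nd b.
  by move=> a b hab; apply/eqP => /ndinj /eqP; rewrite (negbTE hab).
apply: (@hess_ctrb R n A (fun k => lab (nd k)) _ (lab v)).
- by move=> a b /(bij_inj hlab) /ndinj.
- move=> m k hmk; apply/eqP; apply/negPn; rewrite hA; last first.
    by apply: neq; apply/eqP => emk; move: hmk; rewrite emk ltnNge leqW.
  rewrite /G_edge !Tnd (ltn_eqF hmk) orbF; apply/negP => /andP [/eqP et he].
  have /andP [_ hl] := hE _ _ _ he.
  move: et hl; rewrite /nd /= => et; rewrite -et ltnNge => /negP; apply.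
  by apply: count_take_le; apply: ltnW; apply: ltn_trans hmk.
- move=> m k hmk; rewrite hA; last by apply: neq; apply/eqP => emk; move: hmk; rewrite emk => /eqP/n_Sn.
  by rewrite /G_edge !Tnd; apply/orP; right; rewrite eq_sym.
move=> k; rewrite vz (inj_eq (bij_inj hlab)); apply/eqP/eqP.
  by move=> /(congr1 (Tpos S)); rewrite !Tnd.
by move=> k0; congr nd; apply: val_inj.
Qed.
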